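(* For every $\varepsilon>0$ there is $\delta>0$ such that the following holds. Let $G=(V_1,V_2,E)$ be a bipartite graph with $|V_1|\ge|V_2|/2$, and let $\mathcal P=\{\mathbf p_1,\ldots,\mathbf p_k\}$ be an $\varepsilon$-pair-matching in $V_1$ of size $k=|V_2|^{0.5}$. If $W\subset V_2$ is chosen uniformly at random among all subsets of $V_2$, then $\mathbb P\big(|A^W_{\mathcal P}|\ge\delta|V_2|^{0.5}\big)\ge 3/4$, where $$A^W_{\mathcal P}:=\{d^W_{\mathbf p_i}: i\in[k]\}\cap[-3|V_2|^{0.5},3|V_2|^{0.5}].$$
   Context: A bipartite graph $G=(V_1,V_2,E)$ has vertex set $V_1\sqcup V_2$ and edge set $E\subset V_1\times V_2$; $N(v)$ is the neighbourhood and $d(v)$ the degree of $v$, and for $S\subset V_2$, $d^S(v)=|N(v)\cap S|$. For $u,v\in V_1$, $\mathrm{divb}(u,v)$ is the larger of $N(u)\setminus N(v)$, $N(v)\setminus N(u)$ (either if equal). Ordered pairs $\mathbf p=(u,v)$ of distinct vertices are written so that $\mathrm{divb}(\mathbf p)=N(u)\setminus N(v)$; $d_{\mathbf p}:=d(u)-d(v)$ and $d^S_{\mathbf p}:=d^S(u)-d^S(v)$. An $\varepsilon$-pair-matching of size $k$ associated to $V_1$ is a collection of pairwise vertex-disjoint ordered pairs $\mathbf p_i=(x_i,y_i)$, $i\in[k]$, of vertices of $V_1$ with $d_{\mathbf p_i}\le|V_2|^{0.5}$ for all $i$, and $|\mathrm{divb}(\mathbf p_i)\setminus N(x_j)|\ge\varepsilon|V_2|$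 and $|\mathrm{divb}(\mathbf p_i)\setminus N(y_j)|\ge\varepsilon|V_2|$ for all $i\ne j$ in $[k]$. Floors/ceilings of non-integer sizes are ignored. *)

(* Defs.v *)
From HB Require Import structures.
From mathcomp Require Import all_boot all_order all_algebra.
From mathcomp Require Import reals.
Set Implicit Arguments. Unset Strict Implicit. Unset Printing Implicit Defensive.
Import Order.TTheory GRing.Theory Num.Theory.
Local Open Scope ring_scope.

Section Bipartite.
Variables (V1 V2 : finType) (adj : V1 -> V2 -> bool).

Definition nbhd (v : V1) : {set V2} := [set w | adj v w].
Definition deg (v : V1) : nat := #|nbhd v|.
Definition degS (S : {set V2}) (v : V1) : nat := #|nbhd v :&: S|.

(* An ordered pair p = (u,v) is written so that divb(p) = N(u) \ N(v),
   i.e. |N(u)\N(v)| >= |N(v)\N(u)| *)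
Definition ordered_pair (u v : V1) : bool :=
  (u != v) && (#|nbhd v :\: nbhd u| <= #|nbhd u :\: nbhd v|)%N.
Definition divb_p (u v : V1) : {set V2} := nbhd u :\: nbhd v.
Definition d_p (u v : V1) : int := (deg u)%:Z - (deg v)%:Z.
Definition dS_p (S : {set V2}) (u v : V1) : int := (degS S u)%:Z - (degS S v)%:Z.

Definition pair_matching (R : realType) (eps : R) (k : nat)
    (x y : 'I_k -> V1) : Prop :=
  let n := #|V2| in
  [/\ (forall i, ordered_pair (x i) (y i)),
      (forall i j, i != j -> [&& x i != x j, y i != y j & x i != y j]),
      (forall i, (d_p (x i) (y i))%:~R <= Num.sqrt (n%:R : R)),
      (forall i j, i != j -> eps * n%:R <= #|divb_p (x i) (y i) :\: nbhd (x j)|%:R) &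
      (forall i j, i != j -> eps * n%:R <= #|divb_p (x i) (y i) :\: nbhd (y j)|%:R)].

Definition A_set (R : realType) (k : nat) (x y : 'I_k -> V1) (W : {set V2})
    : seq int :=
  undup [seq dS_p W (x i) (y i) | i <- enum 'I_k &
           `|(dS_p W (x i) (y i))%:~R| <= 3 * Num.sqrt (#|V2|%:R : R)].

End Bipartite.

(* Main.v *)
Require Import Defs.
From HB Require Import structures.
From mathcomp Require Import all_boot all_order all_algebra.
From mathcomp Require Import reals.
From mathcomp Require Import zify ring lra.
Import Order.TTheory GRing.Theory Num.Theory.
Set Implicit Arguments. Unset Strict Implicit. Unset Printing Implicit Defensive.


Lemma bin_step t : 'C(t.+1.*2, t.+1) * t.+1 = 2 * (t.*2.+1) * 'C(t.*2, t)
  /\ 'C(t.*2.+1, t) * t.+1 = t.*2.+1 * 'C(t.*2, t).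
Proof.
have h1 := mul_bin_diag (t.*2.+2) t.
have h2 := mul_bin_diag (t.*2.+1) t.
have h3 : 'C(t.*2.+1, t.+1) = 'C(t.*2.+1, t).
  rewrite -(bin_sub (_ : t <= t.*2.+1)); last by lia.
  congr 'C(_, _); lia.
simpl in h1, h2. rewrite h3 in h2.
have -> : t.+1.*2 = t.*2.+2 by lia.
split; lia.
Qed.


Lemma bin_even t : 'C(t.*2, t) ^ 2 * (3 * t + 1) <= 16 ^ t.
Proof.
elim: t => [|t IH]; first by rewrite bin0.
have [h _] := bin_step t.
move: IH h. set c := 'C(t.*2, t). set c' := 'C(_, _). set P := 16 ^ t.
move=> IH h.
have pos : 0 < t.+1 ^ 2 * (3 * t + 1) by rewrite muln_gt0 expn_gt0 addn1.
rewrite -(leq_pmul2r pos).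
have e : c' ^ 2 * (3 * t.+1 + 1) * (t.+1 ^ 2 * (3 * t + 1)) =
      (4 * (t.*2.+1)^2 * (3 * t + 4)) * (c ^ 2 * (3 * t + 1)).
  have E : (c' * t.+1)^2 = (2 * t.*2.+1 * c)^2 by rewrite h.
  rewrite !expnMn in E.
  have -> : 3 * t.+1 + 1 = 3 * t + 4 by lia.

  move: E. generalize (c' ^2) (t.+1 ^ 2) (c ^ 2) ((t.*2.+1) ^ 2) => a b d f E.
  have -> : a * (3 * t + 4) * (b * (3 * t + 1)) = (a * b) * ((3 * t + 4) * (3 * t + 1)) by ring.
  rewrite E. ring.
rewrite e [16 ^ t.+1]expnS.
have : 4 * t.*2.+1 ^ 2 * (3 * t + 4) <= 16 * (t.+1 ^ 2 * (3 * t + 1)).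
  have -> : t.*2.+1 = 2 * t + 1 by lia.
  rewrite !expnS expn0 !muln1. nia.
move=> H. have := leq_mul H IH. move: H IH.
generalize (4 * t.*2.+1 ^ 2 * (3 * t + 4)) (c ^ 2 * (3 * t + 1)) (t.+1 ^ 2 * (3 * t + 1)) => u v w _ _ H.
apply: (leq_trans H). apply: eq_leq. ring.
Qed.


Lemma bin_half m j : 'C(m, j) <= 'C(m, m./2).
Proof.
have hm := odd_double_half m.
have up j0 : j0.+1 <= m./2 -> 'C(m, j0) <= 'C(m, j0.+1).
  move=> hj. have e := mul_bin_left m j0.
  have pos : 0 < j0.+1 by [].
  rewrite -(leq_pmul2l pos) e. apply: leq_mul => //. lia.
have low d : d <= m./2 -> 'C(m, m./2 - d) <= 'C(m, m./2).
  elim: d => [|d IH] hd; first by rewrite subn0.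
  apply: leq_trans (IH (ltnW hd)).
  have -> : m./2 - d = (m./2 - d.+1).+1 by lia.
  apply: up. lia.
have [hj|hj] := leqP j m./2.
  have := low (m./2 - j) (leq_subr _ _). by rewrite subKn.
have [hjm|hjm] := leqP j m; last by rewrite bin_small.
rewrite -bin_sub //.
have := low (m./2 - (m - j)) (leq_subr _ _). rewrite subKn //. lia.
Qed.

Lemma bin_sq m j : 'C(m, j) ^ 2 * m.+1 <= 4 ^ m.
Proof.
have hm := odd_double_half m.
apply: leq_trans (_ : 'C(m, m./2) ^ 2 * m.+1 <= _).
  by rewrite leq_mul2r leq_exp2r // bin_half orbT.
set t := m./2 in hm *.
have he := bin_even t.
case: (odd m) hm => /= hm; rewrite -hm.
- have [_ h] := bin_step t.
  have pos : 0 < t.+1 ^ 2 by rewrite expn_gt0.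
  rewrite -(leq_pmul2r pos).
  have e : 'C((t.*2).+1, t) ^ 2 * (t.*2).+2 * t.+1 ^ 2 = (t.*2.+1)^2 * (t.*2.+2) * 'C(t.*2, t)^2.
    have E : ('C(t.*2.+1, t) * t.+1) ^ 2 = (t.*2.+1 * 'C(t.*2, t)) ^ 2 by rewrite h.
    rewrite !expnMn in E. move: E.
    generalize ('C(t.*2.+1, t) ^ 2) (t.+1 ^ 2) ((t.*2.+1)^2) ('C(t.*2, t) ^ 2) (t.*2.+2) => a b c d f E.
    have -> : a * f * b = (a * b) * f by ring.
    rewrite E. ring.
  rewrite add1n e.
  have H1 : (t.*2.+1)^2 * (t.*2.+2) <= 4 * t.+1 ^ 2 * (3 * t + 1).
    have -> : t.*2 = 2 * t by lia.
    rewrite !expnS expn0 !muln1. nia.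
  have -> : 4 ^ (t.*2.+1) = 4 * 16 ^ t.
    by rewrite expnS -mul2n expnM.
  move: H1 he. generalize ((t.*2.+1)^2 * (t.*2.+2)) ('C(t.*2, t) ^ 2) (16 ^ t) (t.+1 ^ 2) => a b c d H1 H2.
  apply: (leq_trans (leq_mul H1 (leqnn b))).
  have -> : 4 * d * (3 * t + 1) * b = 4 * d * (b * (3 * t + 1)) by ring.
  have -> : 4 * c * d = 4 * d * c by ring.
  by rewrite leq_mul2l H2 orbT.
- have -> : (false : nat) + t.*2 = t.*2 by [].
  have -> : 4 ^ t.*2 = 16 ^ t by rewrite -muln2 mulnC expnM.
  apply: leq_trans he. rewrite leq_mul2l. apply/orP; right. lia.
Qed.



Local Open Scope ring_scope.
Section Anti.
Variable T : finType.

Lemma card_sets : #|{: {set T}}| = (2 ^ #|T|)%N.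
Proof.
rewrite -cardsT -card_powerset; apply: eq_card => A.
by rewrite !inE ?powersetE ?subsetT.
Qed.

Lemma fiber_bound (g : {set T} -> int) (M : {set T}) (t z : int) (U : {set T}) :
  t != 0 ->
  (forall W, g W = t *+ #|W :&: M| + g (W :\: M)) ->
  (#|[set W | (g W == z) && (W :\: M == U)]| <= 'C(#|M|, #|M|./2))%N.
Proof.
move=> t0 hg.
set F := [set W | _].
have [W0 W0F|F0] := pickP (mem F); last first.
  by rewrite (eq_card0 F0).
set j0 := #|W0 :&: M|.
apply: leq_trans (bin_half _ j0).
rewrite -cards_draws.
have inj : {in F &, injective (fun W => W :&: M)}.
  move=> W1 W2; rewrite !inE => /andP[_ /eqP h1] /andP[_ /eqP h2] e.
  by rewrite -(setID W1 M) -(setID W2 M) e h1 h2.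
rewrite -(card_in_imset inj).
apply: subset_leq_card; apply/subsetP => A /imsetP[W WF ->].
rewrite inE subsetIr /=.
move: WF W0F; rewrite !inE => /andP[/eqP gW /eqP hW] /andP[/eqP gW0 /eqP hW0].
have : t *+ #|W :&: M| = t *+ j0.
  have := hg W; have := hg W0. rewrite gW gW0 hW hW0 => ->. 
  by move/addIr.
rewrite -(mulr_natr t #|W :&: M|) -(mulr_natr t j0) => /(mulfI t0) /eqP. by rewrite eqr_nat.
Qed.

Lemma anti (g : {set T} -> int) (M : {set T}) (t z : int) :
  t != 0 ->
  (forall W, g W = t *+ #|W :&: M| + g (W :\: M)) ->
  (#|[set W | g W == z]| ^ 2 * (#|M|).+1 <= 4 ^ #|T|)%N.
Proof.
move=> t0 hg.
have h1 : (#|[set W | g W == z]| <= 2 ^ (#|T| - #|M|) * 'C(#|M|, #|M|./2))%N.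
  rewrite -sum1_card.
  rewrite (partition_big (fun W => W :\: M) (mem (powerset (~: M)))); last first.
    by move=> W _; rewrite /= powersetE setDE subsetIr.
  apply: leq_trans (_ : (\sum_(U in powerset (~: M)) 'C(#|M|, #|M|./2) <= _)%N).
    apply: leq_sum => U _.
    rewrite sum_nat_cond_const muln1.
    apply: leq_trans (fiber_bound z U t0 hg).
    by apply: subset_leq_card; apply/subsetP => W; rewrite !inE.
  by rewrite sum_nat_const card_powerset cardsCs setCK.
have h2 := bin_sq #|M| (#|M|./2).
have hm : (#|M| <= #|T|)%N by apply: max_card.
have e4 : (4 ^ #|T| = 4 ^ (#|T| - #|M|) * 4 ^ #|M|)%N by rewrite -expnD subnK.
rewrite e4.
apply: leq_trans (_ : ((2 ^ (#|T| - #|M|) * 'C(#|M|, #|M|./2))^2 * (#|M|).+1 <= _)%N).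
  by rewrite leq_mul2r leq_exp2r // h1 orbT.
rewrite expnMn.
have -> : ((2 ^ (#|T| - #|M|)) ^ 2 = 4 ^ (#|T| - #|M|))%N by rewrite -expnM mulnC expnM.
by rewrite -mulnA leq_mul2l h2 orbT.
Qed.
End Anti.


Section SM.
Variables (R : realType) (T : finType).

Definition sgn (W : {set T}) (w : T) : R := if w \in W then 1 else -1.
Definition tog (w0 : T) (W : {set T}) : {set T} := if w0 \in W then W :\ w0 else w0 |: W.

Lemma togK w0 : involutive (tog w0).
Proof.
move=> W; rewrite /tog.
case: (boolP (w0 \in W)) => h.
  by rewrite !inE eqxx /= setD1K.
by rewrite !inE eqxx /= setU1K.
Qed.

Lemma sgn_tog w0 W w : sgn (tog w0 W) w = if w == w0 then - sgn W w else sgn W w.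
Proof.
rewrite /sgn /tog; case: (boolP (w0 \in W)) => h; case: eqP => [->|ne].
- by rewrite h !inE eqxx.
- by rewrite !inE; move/eqP: ne => ->.
- by rewrite (negbTE h) !inE eqxx opprK.
- by rewrite !inE; move/eqP: ne => /negbTE ->.
Qed.

Lemma sum_sgn2 w w' : w != w' -> \sum_(W : {set T}) sgn W w * sgn W w' = 0.
Proof.
move=> ne.
have : \sum_(W : {set T}) sgn W w * sgn W w' = - \sum_(W : {set T}) sgn W w * sgn W w'.
  rewrite {1}(reindex_inj (can_inj (togK w'))) /= -sumrN; apply: eq_bigr => W _.
  by rewrite !sgn_tog (negbTE ne) eqxx mulrN.
move=> h. lra.
Qed.

Lemma sgn_sq W w : sgn W w * sgn W w = 1.
Proof. by rewrite /sgn; case: (w \in W); rewrite ?mulr1 ?mulrNN ?mulr1. Qed.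

Lemma second_moment (c : T -> R) :
  \sum_(W : {set T}) (\sum_w c w * sgn W w) ^+ 2 = (2 ^ #|T|)%N%:R * \sum_w c w ^+ 2.
Proof.
transitivity (\sum_(W : {set T}) \sum_w \sum_w' (c w * c w') * (sgn W w * sgn W w')).
  apply: eq_bigr => W _; rewrite expr2 mulr_suml; apply: eq_bigr => w _.
  rewrite mulr_sumr; apply: eq_bigr => w' _; ring.
rewrite exchange_big /=.
rewrite mulr_sumr; apply: eq_bigr => w _.
rewrite exchange_big /= (bigD1 w) //= [X in _ + X]big1; last first.
  move=> w' ne; rewrite -mulr_sumr sum_sgn2 ?mulr0 //.
  by rewrite eq_sym.
rewrite addr0 -mulr_sumr.
under eq_bigr do rewrite sgn_sq.
rewrite sumr_const -card_sets.
by rewrite mulrC expr2.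
Qed.
End SM.
Arguments sgn {R T}.


Lemma anti_sum (T : finType) (c : T -> int) (M : {set T}) (t z : int) :
  t != 0 -> (forall w, w \in M -> c w = t) ->
  (#|[set W : {set T} | (\sum_(w in W) c w)%R == z]| ^ 2 * (#|M|).+1 <= 4 ^ #|T|)%N.
Proof.
move=> t0 hc; apply: (anti (g := fun W => \sum_(w in W) c w) z t0) => W.
rewrite (big_setID M) /=; congr (_ + _).
rewrite -sumr_const; apply: eq_bigr => w; rewrite inE => /andP[_ h]; exact: hc.
Qed.

Lemma card_sumR (R : pzSemiRingType) (T : finType) (B : {set T}) :
  (#|B|%:R : R) = \sum_w (w \in B)%:R.
Proof.
rewrite -sum1_card natr_sum big_mkcond /=; apply: eq_bigr => w _.
by case: (w \in B).
Qed.

Lemma card_sumIR (R : pzRingType) (T : finType) (A W : {set T}) :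
  (#|A :&: W|%:R : R) = \sum_(w in W) (w \in A)%:R.
Proof.
rewrite card_sumR [RHS]big_mkcond /=; apply: eq_bigr => w _.
by rewrite inE; case: (w \in A); case: (w \in W).
Qed.

Section G.
Variables (V1 V2 : finType) (adj : V1 -> V2 -> bool).

Lemma dS_sum (W : {set V2}) (u v : V1) :
  dS_p adj W u v = \sum_(w in W) ((adj u w)%:Z - (adj v w)%:Z).
Proof.
rewrite /dS_p /degS sumrB.
rewrite -[(#|nbhd adj u :&: W|)%:Z]natz -[(#|nbhd adj v :&: W|)%:Z]natz !card_sumIR.
by congr (_ - _); apply: eq_bigr => w _; rewrite inE natz.
Qed.


Lemma d_sum (u v : V1) :
  d_p adj u v = \sum_w ((adj u w)%:Z - (adj v w)%:Z).
Proof.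
rewrite /d_p /deg sumrB.
rewrite -[(#|nbhd adj u|)%:Z]natz -[(#|nbhd adj v|)%:Z]natz !card_sumR.
by congr (_ - _); apply: eq_bigr => w _; rewrite inE natz.
Qed.

Lemma markov (R : realType) (T : finType) (P : pred T) (f : T -> R) (a : R) :
  (forall W, 0 <= f W) -> (forall W, P W -> a <= f W) ->
  #|[set W | P W]|%:R * a <= \sum_W f W.
Proof.
move=> f0 fa.
apply: le_trans (_ : \sum_(W in [set W | P W]) f W <= _).
  rewrite mulr_natl -sumr_const; apply: ler_sum => W; rewrite inE; exact: fa.
rewrite [X in _ <= X](bigID (mem [set W | P W])) /= lerDl.
by apply: sumr_ge0 => W _; apply: f0.
Qed.

Lemma cheb (R : realType) (u v : V1) :
  (0 < #|V2|)%N -> 0 <= d_p adj u v ->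
  ((d_p adj u v)%:~R <= Num.sqrt (#|V2|%:R : R)) ->
  (#|[set W : {set V2} | (3 * Num.sqrt (#|V2|%:R : R) < `|(dS_p adj W u v)%:~R|)%R]| * 25
     <= 2 ^ #|V2|)%N.
Proof.
move=> N0 d0 ds.
set N := #|V2|. set sq := Num.sqrt (N%:R : R).
have sq0 : 0 <= sq by apply: sqrtr_ge0.
have sq2 : sq ^+ 2 = N%:R by rewrite sqr_sqrtr // ler0n.
have Npos : (0 : R) < N%:R by rewrite ltr0n.
set c := fun w => (((adj u w)%:Z - (adj v w)%:Z)%:~R : R).
have hY W : 2 * (dS_p adj W u v)%:~R - (d_p adj u v)%:~R = \sum_w c w * sgn W w.
  rewrite dS_sum d_sum !rmorph_sum /= mulr_sumr big_mkcond /= -sumrB.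
  apply: eq_bigr => w _; rewrite /c /sgn.
  by case: (w \in W); case: (adj u w); case: (adj v w); rewrite /= ?mulr0 ?mulr1 ?mulrN1; lra.
have SM := second_moment c.
have Sc : \sum_w c w ^+ 2 <= N%:R.
  rewrite /N -sum1_card natr_sum. apply: ler_sum => w _.
  by rewrite /c; case: (adj u w); case: (adj v w); rewrite /= ?expr2; lra.
have key := markov (P := fun W => 3 * sq < `|(dS_p adj W u v)%:~R|)
   (f := fun W => (\sum_w c w * sgn W w) ^+ 2) (a := 25 * N%:R)
   (fun W => sqr_ge0 _).
have : #|[set W : {set V2} | 3 * sq < `|(dS_p adj W u v)%:~R|]|%:R * (25 * N%:R)
         <= (2 ^ N)%:R * (N%:R : R).
  apply: le_trans (key _) _.
    move=> W /=; rewrite -hY. 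
    set Z := ((dS_p adj W u v)%:~R : R). set d := ((d_p adj u v)%:~R : R).
    have d0' : 0 <= d by rewrite /d ler0z.
    rewrite ltr_normr => /orP[h|h]; rewrite -sq2.
      have ds2 : d <= sq by exact: ds.
      have h1 : 5 * sq <= 2 * Z - d by lra. nra.
    have ds2 : d <= sq by exact: ds.
    have h1 : 5 * sq <= -(2 * Z - d) by lra. nra.
  by rewrite SM; apply: ler_wpM2l => //; rewrite ler0n.
rewrite mulrA -natrM => h.
have := ler_pM2r Npos. move=> e. rewrite e in h.
by rewrite ler_nat in h.
Qed.

Lemma coll (R : realType) (eps : R) (xi yi xj yj : V1) :
  eps * #|V2|%:R <= #|divb_p adj xi yi :\: nbhd adj xj|%:R ->
  exists m : nat, eps * #|V2|%:R <= (2 * m)%:R /\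
    (#|[set W : {set V2} | dS_p adj W xi yi == dS_p adj W xj yj]| ^ 2 * m.+1
       <= 4 ^ #|V2|)%N.
Proof.
move=> he.
set c := fun w => ((adj xi w)%:Z - (adj yi w)%:Z - ((adj xj w)%:Z - (adj yj w)%:Z)).
have eset : [set W : {set V2} | dS_p adj W xi yi == dS_p adj W xj yj]
          = [set W : {set V2} | (\sum_(w in W) c w)%R == 0].
  apply/setP => W; rewrite !inE !dS_sum -subr_eq0 -sumrB.
  by [].
rewrite eset.
set M0 := divb_p adj xi yi :\: nbhd adj xj in he *.
have hcard := cardsID (nbhd adj yj) M0.
have memM0 w : w \in M0 -> [/\ adj xi w, ~~ adj yi w & ~~ adj xj w].
  by rewrite /M0 /divb_p !inE => /andP[h1 /andP[h2 h3]].
have [le21|lt12] := leqP #|M0 :\: nbhd adj yj| #|M0 :&: nbhd adj yj|.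
- exists #|M0 :&: nbhd adj yj|; split.
    apply: le_trans he _; rewrite ler_nat; lia.
  apply: (anti_sum (t := 2)) => // w; rewrite inE => /andP[/memM0[h1 h2 h3] h4].
  by rewrite /c h1 (negbTE h2) (negbTE h3); rewrite inE in h4; rewrite h4.
- exists #|M0 :\: nbhd adj yj|; split.
    apply: le_trans he _; rewrite ler_nat; lia.
  apply: (anti_sum (t := 1)) => // w; rewrite inE => /andP[h4 /memM0[h1 h2 h3]].
  by rewrite /c h1 (negbTE h2) (negbTE h3); rewrite inE in h4; rewrite (negbTE h4).
Qed.

End G.


Section M.
Variables (R : realType) (V1 V2 : finType) (adj : V1 -> V2 -> bool).
Variables (k : nat) (x y : 'I_k -> V1).

Definition Zf (W : {set V2}) (i : 'I_k) : int := dS_p adj W (x i) (y i).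
Definition outb (W : {set V2}) (i : 'I_k) : bool :=
  3 * Num.sqrt (#|V2|%:R : R) < `|(Zf W i)%:~R|.
Definition Bf (k' : nat) (W : {set V2}) : nat :=
  (\sum_(i : 'I_k | i < k') outb W i +
   \sum_(i : 'I_k | i < k') \sum_(j : 'I_k | j < i) (Zf W j == Zf W i))%N.

Lemma step1 (k' : nat) (W : {set V2}) : (k' <= k)%N ->
  (k' <= size (A_set adj R x y W) + Bf k' W)%N.
Proof.
move=> hk.
set G := [set i : 'I_k | [&& (i < k')%N, ~~ outb W i &
            [forall j : 'I_k, (j < i)%N ==> (Zf W j != Zf W i)]]].
have hG : (#|G| <= size (A_set adj R x y W))%N.
  rewrite cardE -(size_map (Zf W)).
  apply: uniq_leq_size.
    rewrite map_inj_in_uniq ?enum_uniq //.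
    move=> i1 i2; rewrite !mem_enum !inE => /and3P[_ _ /forallP h1] /and3P[_ _ /forallP h2] e.
    apply/val_inj/eqP; case: (ltngtP i1 i2) => // [lt|lt].
      by have := h2 i1; rewrite lt e eqxx.
    by have := h1 i2; rewrite lt e eqxx.
  move=> z /mapP[i]; rewrite mem_enum inE => /and3P[_ hi _] ->.
  rewrite /A_set mem_undup; apply/mapP; exists i => //.
  by rewrite mem_filter mem_enum andbT /=; rewrite /outb -leNgt in hi.
have hk' : k' = (\sum_(i : 'I_k | (i < k')%N) 1)%N.
  by rewrite -(big_ord_widen _ (fun _ => 1%N) hk) sum1_card card_ord.
apply: (@leq_trans (#|G| + Bf k' W)); last by rewrite leq_add2r.
rewrite /Bf addnA [X in (X <= _)%N]hk'.
apply: leq_trans (_ : (\sum_(i : 'I_k | (i < k')%N) ((i \in G) + outb W i +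
    \sum_(j : 'I_k | (j < i)%N) (Zf W j == Zf W i)))%N <= _)%N.
  apply: leq_sum => i hi.
  case: (boolP (i \in G)) => hiG; first by rewrite addnAC leq_addr.
  case: (boolP (outb W i)) => ho; first by rewrite addnC addnA leq_addl.
  move: hiG; rewrite inE hi ho /= => /forallPn[j]; rewrite negb_imply negbK => /andP[hj e].
  rewrite (bigD1 j) //= e; lia.
rewrite !big_split /= leq_add2r leq_add2r.
apply: (@leq_trans (\sum_(i : 'I_k) (i \in G))%N).
  by rewrite [X in (_ <= X)%N](bigID (fun i : 'I_k => (i < k')%N)) /= leq_addr.
by rewrite -sum1_card [X in (_ <= X)%N]big_mkcond /=; apply: leq_sum => i _; case: (i \in G).
Qed.

Lemma sum_card (T : finType) (P : pred T) :
  (\sum_(W : T) P W)%N = #|[set W | P W]|.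
Proof.
by rewrite -sum1_card [RHS]big_mkcond /=; apply: eq_bigr => W _; rewrite inE; case: (P W).
Qed.

Lemma d_p_ge0 (u v : V1) : ordered_pair adj u v -> 0 <= d_p adj u v.
Proof.
move=> /andP[_ h].
rewrite /d_p /deg subr_ge0 lez_nat.
rewrite -(cardsID (nbhd adj v) (nbhd adj u)) -(cardsID (nbhd adj u) (nbhd adj v)) setIC.
by rewrite leq_add2l.
Qed.

Lemma sum_lt (k' : nat) : (k' <= k)%N -> (\sum_(i : 'I_k | (i < k')%N) 1 = k')%N.
Proof. by move=> hk; rewrite -(big_ord_widen _ (fun _ => 1%N) hk) sum1_card card_ord. Qed.

Lemma part1 (k' : nat) (eps : R) : (k' <= k)%N -> (0 < #|V2|)%N ->
  pair_matching adj eps x y ->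
  ((\sum_(W : {set V2}) \sum_(i : 'I_k | (i < k')%N) outb W i) * 25 <= k' * 2 ^ #|V2|)%N.
Proof.
move=> hk N0 [hord _ hd _ _].
rewrite exchange_big /= big_distrl /= -{2}(sum_lt hk) big_distrl /=.
apply: leq_sum => i _; rewrite mul1n sum_card.
apply: cheb => //; exact: d_p_ge0.
Qed.

Lemma arith16 a c m N : (a ^ 2 * 256 <= m)%N -> (c ^ 2 * m.+1 <= N)%N ->
  ((16 * a * c) ^ 2 <= N)%N.
Proof.
move=> hm h; apply: leq_trans h.
have -> : ((16 * a * c) ^ 2 = (a ^ 2 * 256) * c ^ 2)%N by ring.
apply: (@leq_trans (m * c ^ 2)); first by rewrite leq_mul2r hm orbT.
by rewrite [(m * _)%N]mulnC leq_mul2l leqnSn orbT.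
Qed.

Lemma part2 (k' : nat) (eps : R) : (k' <= k)%N -> pair_matching adj eps x y ->
  ((k'.-1 ^ 2 * 512)%:R <= eps * #|V2|%:R) ->
  ((\sum_(W : {set V2}) \sum_(i : 'I_k | (i < k')%N) \sum_(j : 'I_k | (j < i)%N)
      (Zf W j == Zf W i)) * 16 <= k' * 2 ^ #|V2|)%N.
Proof.
move=> hk [_ _ _ hx _] hk2.
have hc (i j : 'I_k) : (j < i)%N ->
    (16 * k'.-1 * #|[set W | Zf W j == Zf W i]| <= 2 ^ #|V2|)%N.
  move=> ji.
  have ne : j != i by rewrite neq_ltn ji.
  have [m [hm1 hm2]] := coll (y i) (hx j i ne).
  have hm : (k'.-1 ^ 2 * 256 <= m)%N.
    have := le_trans hk2 hm1; rewrite ler_nat; lia.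
  rewrite -(@leq_exp2r _ _ 2) //.
  have -> : ((2 ^ #|V2|) ^ 2 = 4 ^ #|V2|)%N by rewrite -expnM mulnC expnM.
  exact: arith16 hm hm2.
rewrite exchange_big /=.
under eq_bigr do rewrite exchange_big /=.
under eq_bigr do under eq_bigr do rewrite sum_card.
have [k1|k2] := leqP k' 1.
  rewrite big1 // => i ik; rewrite big1 // => j ji; lia.
have pos : (0 < k'.-1)%N by lia.
rewrite -(leq_pmul2r pos) -mulnA big_distrl /=.
apply: (@leq_trans (\sum_(i : 'I_k | (i < k')%N) (k'.-1 * 2 ^ #|V2|))%N); last first.
  rewrite (eq_bigr (fun _ => 1 * (k'.-1 * 2 ^ #|V2|))%N); last by move=> *; rewrite mul1n.
  by rewrite -big_distrl /= sum_lt //; apply: eq_leq; ring.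
apply: leq_sum => i ik.
rewrite big_distrl /=.
apply: (@leq_trans (\sum_(j : 'I_k | (j < i)%N) 2 ^ #|V2|)%N).
  apply: leq_sum => j ji; rewrite mulnC; exact: hc.
rewrite (eq_bigr (fun _ => 1 * 2 ^ #|V2|))%N; last by move=> *; rewrite mul1n.
rewrite -big_distrl /= sum_lt; last exact: ltnW (ltn_ord i).
by rewrite leq_mul2r; apply/orP; right; lia.
Qed.
End M.
Lemma markov_nat (T : finType) (P : pred T) (f : T -> nat) a :
  (forall W, P W -> a <= f W)%N -> (#|[set W | P W]| * a <= \sum_W f W)%N.
Proof.
move=> h; rewrite -sum_nat_cond_const.
apply: (@leq_trans (\sum_(W | P W) f W)%N); first exact: leq_sum.
by rewrite [X in (_ <= X)%N](bigID P) /= leq_addr.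
Qed.

Lemma arith_SB a b K : (a * 25 <= K)%N -> (b * 16 <= K)%N -> ((a + b) * 400 <= 41 * K)%N.
Proof. lia. Qed.

Lemma arith_bad b S k' P : (0 < k')%N -> (b * k' <= 2 * S)%N ->
  (S * 400 <= 41 * (k' * P))%N -> (b * 4 <= P)%N.
Proof.
move=> kp h1 h2.
have : ((b * 400) * k' <= (82 * P) * k')%N.
  have e1 : ((b * 400) * k' = (b * k') * 400)%N by ring.
  have e2 : ((82 * P) * k' = 2 * (41 * (k' * P)))%N by ring.
  rewrite e1 e2; apply: (@leq_trans (2 * S * 400)%N).
    by rewrite leq_mul2r h1 orbT.
  by rewrite -mulnA leq_mul2l h2 orbT.
rewrite leq_pmul2r // => h; lia.
Qed.

Lemma arith_good k' s B : (k' <= s + B)%N -> ~~ (k' <= 2 * B)%N -> (k' < 2 * s)%N.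
Proof. lia. Qed.

Lemma arith_fin g b c P : (b + c = P)%N -> (c <= g)%N -> (b * 4 <= P)%N -> (3 * P <= 4 * g)%N.
Proof. lia. Qed.

Unset Implicit Arguments.

Theorem lemma3p4 (R : realType) :
  forall eps : R, 0 < eps ->
  exists delta : R, 0 < delta /\
  forall (V1 V2 : finType) (adj : V1 -> V2 -> bool) (k : nat)
         (x y : 'I_k -> V1),
    (#|V2| <= 2 * #|V1|)%N ->
    (k%:R <= Num.sqrt (#|V2|%:R : R) < k.+1%:R) ->
    pair_matching adj eps x y ->
    (#|[set W : {set V2} |
          delta * Num.sqrt (#|V2|%:R : R) <= (size (A_set adj R x y W))%:R]|%:R
       / #|{: {set V2}}|%:R : R) >= 3 / 4.
Proof.
move=> eps e0.
set e1 := Num.min 1 eps.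
have e1pos : 0 < e1 by rewrite lt_min e0 ltr01.
have e11 : e1 <= 1 by rewrite ge_min lexx.
have e1e : e1 <= eps by rewrite ge_min lexx orbT.
exists (e1 / 64); split; first by rewrite divr_gt0.
move=> V1 V2 adj k x y _ /andP[hk1 hk2] hpm.
rewrite card_sets.
set N := #|V2| in hk1 hk2 *. set sq := Num.sqrt (N%:R : R) in hk1 hk2 *.
have Ppos : (0 : R) < (2 ^ N)%N%:R by rewrite ltr0n expn_gt0.
rewrite ler_pdivlMr //.
have sq0 : 0 <= sq by apply: sqrtr_ge0.
have sq2 : sq ^+ 2 = N%:R by rewrite sqr_sqrtr // ler0n.
have [N0|Npos] := posnP N.
  have -> : [set W : {set V2} | e1 / 64 * sq <= (size (A_set adj R x y W))%:R] = setT.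
    apply/setP => W; rewrite !inE.
    have -> : sq = 0 by rewrite /sq N0 sqrtr0.
    by rewrite mulr0 ler0n.
  rewrite cardsT card_sets -/N; lra.
have sq1 : 1 <= sq by rewrite -sqrtr1 ler_sqrt // ler1n.
set d' := e1 / 32.
have d'0 : 0 < d' by rewrite divr_gt0.
have dsq0 : 0 <= d' * sq by rewrite mulr_ge0 // ltW.
set t := Num.truncn (d' * sq).
have ht1 : t%:R <= d' * sq by rewrite truncn_le.
have ht2 : d' * sq < t.+1%:R by apply: truncnS_gt.
set k' := minn k t.+1.
have kpos : (0 < k)%N.
  have : ((1%N)%:R : R) < k.+1%:R by rewrite (_ : (1%N)%:R = 1 :> R) //; lra.
  by rewrite ltr_nat ltnS.
have hk'k : (k' <= k)%N by apply: geq_minl.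
have hk't : (k' <= t.+1)%N by apply: geq_minr.
have hk'pos : (0 < k')%N by rewrite leq_min kpos.
have F2 : d' * sq <= k'%:R.
  case: (leqP k t.+1) => h.
  - have -> : k' = k by rewrite /k'; apply/minn_idPl.
    have k1 : (1 : R) <= k%:R by rewrite ler1n.
    have hd32 : d' <= 1 / 32 by rewrite /d'; lra.
    have : d' * sq <= 1 / 32 * sq by rewrite ler_wpM2r.
    rewrite -natr1 in hk2; lra.
  - have -> : k' = t.+1 by rewrite /k'; apply/minn_idPr; apply: ltnW.
    exact: ltW.
have F3 : ((k'.-1 ^ 2 * 512)%N%:R <= eps * N%:R).
  have hk1' : (k'.-1 <= t)%N by rewrite -ltnS prednK.
  have a_le : (k'.-1)%:R <= d' * sq.
    apply: le_trans ht1; by rewrite ler_nat.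
  rewrite natrM natrX.
  move: a_le; set a := (k'.-1)%:R => a_le.
  have a0 : (0 : R) <= a by rewrite ler0n.
  have h1 : a ^+ 2 <= (d' * sq) ^+ 2 by rewrite ler_pXn2r // nnegrE.
  rewrite exprMn sq2 in h1.
  have Nn : (0 : R) <= N%:R by rewrite ler0n.
  have h2 : d' ^+ 2 * 512 <= eps.
    have ee : e1 * e1 <= e1 by rewrite ler_piMl // ltW.
    have -> : d' ^+ 2 * 512 = (e1 * e1) / 2 by rewrite /d' expr2; field.
    lra.
  apply: le_trans (_ : d' ^+ 2 * N%:R * 512 <= _).
    by rewrite ler_wpM2r.
  by rewrite mulrAC ler_wpM2r.
have S1 := part1 hk'k Npos hpm.
have S2 := part2 hk'k hpm F3.
have SB : ((\sum_(W : {set V2}) @Bf R V1 V2 adj k x y k' W) * 400 <= 41 * (k' * 2 ^ N))%N.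
  rewrite /Bf big_split /=. exact: arith_SB S1 S2.
have hm := markov_nat (P := fun W => (k' <= 2 * @Bf R V1 V2 adj k x y k' W)%N)
   (f := fun W => (2 * @Bf R V1 V2 adj k x y k' W)%N) (a := k') (fun W h => h).
rewrite -big_distrr /= in hm.
have hbad := arith_bad hk'pos hm SB.
set bad := [set W : {set V2} | _] in hbad.
set Good := [set W : {set V2} | _].
have hsub : ~: bad \subset Good.
  apply/subsetP => W; rewrite !inE => hW.
  have h1 := @step1 R V1 V2 adj k x y k' W hk'k.
  have h2 := arith_good h1 hW.
  have h3 : (k'%:R : R) < 2 * (size (A_set adj R x y W))%:R.
    by rewrite -natrM ltr_nat.
  have -> : e1 / 64 = d' / 2 by rewrite /d'; field.
  lra.
have hc := cardsC bad.
rewrite card_sets in hc.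
have hfin := arith_fin hc (subset_leq_card hsub) hbad.
have : ((3 * 2 ^ N)%N%:R : R) <= (4 * #|Good|)%N%:R by rewrite ler_nat.
rewrite !natrM; lra.
Qed.
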